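(* Let $G$ be a finite simple cubic graph with a 3-decomposition $(T,C,M)$, and colour exactly the edges of $T$ green and all other edges black. If $T$ is a homeomorphically irreducible spanning tree (HIST), then $M=\emptyset$. Otherwise there is a finite simple cubic graph $G'$ with fewer vertices than $G$ and a 3-decomposition $(T',C,M')$ of $G'$ (with the same 2-regular part $C$) such that, if exactly the edges of $T'$ are coloured green, then $G$ together with its green/black colouring is obtained from $G'$ together with its colouring by a single Tutte-extension or a single diamond-extension. In particular, every 3-decomposition can be reduced to a 3-decomposition whose spanning tree is a HIST by a finite sequence of Tutte- and diamond-reductions.
   Context: All graphs are finite and simple. A graph is cubic if every vertex has degree 3. A 3-decomposition $(T,C,M)$ of a graph $G$ is a partition of $E(G)$ into the edge sets of a spanning tree $T$, a (possibly empty) 2-regular subgraph $C$ (a vertex-disjoint union of cycles), and a (possibly empty) matching $M$. A HIST (homeomorphically irreducible spanning tree) is a spanning tree without vertices of degree 2. The operations act on graphs whose edges are coloured green or black. Tutte-extension: choose two distinct green edges $x_uy_u$ and $x_vy_v$ (they may share an end); subdivide the first by a new vertex $u$ and the second by a new vertex $v$, the four resulting edges $x_uu,uy_u,x_vv,vy_v$ being green, and add a new black edge $uv$. Diamond-extension: choose a green edge $xy$, delete it, add new vertices $d_1,d_2,d_3,d_4$ with green edges $xd_1, d_1d_3, d_3d_2, d_2d_4, d_4y$ and black edges $d_1d_2, d_3d_4$ (so $d_1,d_2,d_3,d_4$ span a diamond, i.e. $K_4$ minus the edge $d_1d_4$). Tutte-reduction and diamond-reduction are the inverse operations. *)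

(* Defs.v *)
(* Graphs on a finite vertex type V: a graph is a vertex set
   S : {set V} with an edge set E : {set {set V}} of 2-element subsets of S
   (hence finite and simple). *)
From Stdlib Require Import Relation_Operators.
From mathcomp Require Import all_boot.
Set Implicit Arguments. Unset Strict Implicit. Unset Printing Implicit Defensive.

Section Defs.
Variable V : finType.
Implicit Types (S : {set V}) (E F T C M : {set {set V}}).

Definition is_graph S E : Prop := forall e, e \in E -> #|e| = 2 /\ e \subset S.

Definition deg F (x : V) : nat := #|[set e in F | x \in e]|.

Definition cubic S E : Prop := forall x, x \in S -> deg E x = 3.

Definition adj F : rel V := fun a b => [set a; b] \in F.

Definition connected_on S F : Prop :=
  forall x y, x \in S -> y \in S -> connect (adj F) x y.

Definition has_cycle F : Prop :=
  exists s : seq V, [/\ uniq s, 3 <= size s & cycle (adj F) s].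

Definition spanning_tree S E T : Prop :=
  T \subset E /\ connected_on S T /\ ~ has_cycle T.

Definition two_regular_sub E C : Prop :=
  C \subset E /\ forall x, deg C x = 0 \/ deg C x = 2.

Definition matching E M : Prop := M \subset E /\ forall x, deg M x <= 1.

Definition decomp3 S E T C M : Prop :=
  [/\ spanning_tree S E T, two_regular_sub E C, matching E M,
      T :&: C = set0 /\ T :&: M = set0 /\ C :&: M = set0
    & T :|: C :|: M = E].

Definition HIST S E T : Prop :=
  spanning_tree S E T /\ forall x, x \in S -> deg T x != 2.

(* (S,E) with green edges T is obtained from (S',E') with green edges T'
   by a Tutte-extension; black edges are the non-green ones. *)
Definition tutte_ext S' E' T' S E T : Prop :=
  exists xu yu xv yv u v : V,
    [set xu; yu] \in T' /\ [set xv; yv] \in T' /\ [set xu; yu] != [set xv; yv] /\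
    u \notin S' /\ v \notin S' /\ u != v /\
    S = S' :|: [set u; v] /\
    T = (T' :\: [set [set xu; yu]; [set xv; yv]])
          :|: [set [set xu; u]; [set u; yu]; [set xv; v]; [set v; yv]] /\
    E = (E' :\: [set [set xu; yu]; [set xv; yv]])
          :|: [set [set xu; u]; [set u; yu]; [set xv; v]; [set v; yv]; [set u; v]].

Definition diamond_ext S' E' T' S E T : Prop :=
  exists x y d1 d2 d3 d4 : V,
    [set x; y] \in T' /\ uniq [:: d1; d2; d3; d4] /\
    d1 \notin S' /\ d2 \notin S' /\ d3 \notin S' /\ d4 \notin S' /\
    S = S' :|: [set d1; d2; d3; d4] /\
    T = (T' :\ [set x; y])
          :|: [set [set x; d1]; [set d1; d3]; [set d3; d2]; [set d2; d4]; [set d4; y]] /\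
    E = (E' :\ [set x; y])
          :|: [set [set x; d1]; [set d1; d3]; [set d3; d2]; [set d2; d4]; [set d4; y];
                   [set d1; d2]; [set d3; d4]].

(* One reduction step (inverse of an extension) keeping the 2-regular part C:
   from a 3-decomposition (T,C,M) of (S,E) to a 3-decomposition (T',C,M') of a
   finite simple cubic graph (S',E'). *)
Definition red_step (C : {set {set V}})
  (a b : {set V} * {set {set V}} * {set {set V}} * {set {set V}}) : Prop :=
  let: (Sa, Ea, Ta, Ma) := a in
  let: (Sb, Eb, Tb, Mb) := b in
  [/\ is_graph Sb Eb, cubic Sb Eb, decomp3 Sb Eb Tb C Mb
    & tutte_ext Sb Eb Tb Sa Ea Ta \/ diamond_ext Sb Eb Tb Sa Ea Ta].

End Defs.

(* Main.v *)
Require Import Defs.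
From Stdlib Require Import Relation_Operators.
From mathcomp Require Import all_boot.
Set Implicit Arguments. Unset Strict Implicit. Unset Printing Implicit Defensive.


Section Basics.
Variable V : finType.
Implicit Types (S : {set V}) (E F T C M : {set {set V}}).

Lemma set2_eq (a b c d : V) : [set a; b] = [set c; d] ->
  (a = c /\ b = d) \/ (a = d /\ b = c).
Proof.
move=> H.
have ha : a \in [set c; d] by rewrite -H set21.
have hb : b \in [set c; d] by rewrite -H set22.
have hc : c \in [set a; b] by rewrite H set21.
have hd : d \in [set a; b] by rewrite H set22.
move/set2P: ha => [] ?; move/set2P: hb => [] ?; move/set2P: hc => [] ?;
  move/set2P: hd => [] ?; subst; auto.
Qed.

Lemma set2_neq (a b c d : V) : a \notin [set c; d] -> [set a; b] != [set c; d].
Proof. by move=> h; apply/eqP => H; move: h; rewrite -H set21. Qed.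

Lemma set2_neq' (a b c d : V) : b \notin [set c; d] -> [set a; b] != [set c; d].
Proof. by move=> h; apply/eqP => H; move: h; rewrite -H set22. Qed.

Lemma adj_sym F : symmetric (adj F).
Proof. by move=> a b; rewrite /adj setUC. Qed.

Lemma edge2 (e : {set V}) x : #|e| = 2 -> x \in e -> exists y, y != x /\ e = [set x; y].
Proof.
move/eqP/cards2P => [a [b [ab ->]]] /set2P [] ->.
  by exists b; rewrite eq_sym.
by exists a; split => //; rewrite setUC.
Qed.

Lemma connect_ind (e : rel V) (P : V -> Prop) x y :
  P x -> (forall p q, P p -> e p q -> P q) -> connect e x y -> P y.
Proof.
move=> Px step /connectP [s].
elim: s x Px => [|z s IH] x Px /=; first by move=> _ ->.
by move/andP=> [exz pz] ey; apply: (IH z (step _ _ Px exz) pz ey).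
Qed.

Lemma deg_UI F1 F2 x : deg (F1 :|: F2) x + deg (F1 :&: F2) x = deg F1 x + deg F2 x.
Proof.
rewrite /deg -[RHS]cardsUI; congr (_ + _); apply: eq_card => e; rewrite !inE;
  by case: (e \in F1); case: (e \in F2); case: (x \in e).
Qed.

Lemma deg0set x : deg (set0 : {set {set V}}) x = 0.
Proof. by rewrite /deg; apply/eqP; rewrite cards_eq0; apply/eqP/setP => e; rewrite !inE. Qed.

Lemma deg1 (e : {set V}) x : deg [set e] x = (x \in e).
Proof.
rewrite /deg; case: (boolP (x \in e)) => h.
  have -> : [set f in [set e] | x \in f] = [set e] by apply/setP => f; rewrite !inE; case: eqP => // ->.
  by rewrite cards1.
have -> : [set f in [set e] | x \in f] = set0 by apply/setP => f; rewrite !inE; case: eqP => // ->; rewrite (negbTE h).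
by rewrite cards0.
Qed.

Lemma deg_D1 F e x : e \in F -> deg F x = deg (F :\ e) x + (x \in e).
Proof.
move=> eF; rewrite -deg1 -deg_UI.
have -> : (F :\ e) :&: [set e] = set0 by apply/setP => f; rewrite !inE; case: (f == e); rewrite ?andbF ?andbT.
by rewrite deg0set addn0 setUC (setD1K eF).
Qed.

Lemma deg_U1 F e x : e \notin F -> deg (e |: F) x = deg F x + (x \in e).
Proof.
move=> eF; rewrite -deg1 addnC -deg_UI.
have -> : [set e] :&: F = set0 by apply/setP => f; rewrite !inE; case: eqP => // ->; rewrite (negbTE eF).
by rewrite deg0set addn0.
Qed.

Lemma deg_sub F1 F2 x : F1 \subset F2 -> deg F1 x <= deg F2 x.
Proof.
move=> s; apply: subset_leq_card; apply/subsetP => e; rewrite !inE => /andP[h ->].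
by rewrite (subsetP s _ h).
Qed.

Lemma deg_gt0 F e x : e \in F -> x \in e -> 0 < deg F x.
Proof. by move=> eF xe; rewrite /deg card_gt0; apply/set0Pn; exists e; rewrite inE eF. Qed.

Lemma deg_part F1 F2 F3 x : F1 :&: F2 = set0 -> F1 :&: F3 = set0 -> F2 :&: F3 = set0 ->
  deg (F1 :|: F2 :|: F3) x = deg F1 x + deg F2 x + deg F3 x.
Proof.
move=> h12 h13 h23.
have := deg_UI (F1 :|: F2) F3 x; rewrite setIUl h13 h23 setU0 deg0set addn0 => ->.
by have := deg_UI F1 F2 x; rewrite h12 deg0set addn0 => ->.
Qed.

Lemma deg2_edges F x : deg F x = 2 -> exists e1 e2, e1 != e2 /\ [/\ e1 \in F, e2 \in F, x \in e1, x \in e2 &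
   forall e, e \in F -> x \in e -> e = e1 \/ e = e2].
Proof.
rewrite /deg => /eqP/cards2P [e1 [e2 [ne H]]].
have h1 : e1 \in [set e in F | x \in e] by rewrite H set21.
have h2 : e2 \in [set e in F | x \in e] by rewrite H set22.
move: h1 h2; rewrite !inE => /andP[? ?] /andP[? ?].
exists e1, e2; split => //; split => // e eF xe.
have : e \in [set e in F | x \in e] by rewrite inE eF.
by rewrite H => /set2P.
Qed.

Lemma deg1_edge F x : deg F x = 1 -> exists e, [/\ e \in F, x \in e &
   forall f, f \in F -> x \in f -> f = e].
Proof.
rewrite /deg => /eqP/cards1P [e H].
have : e \in [set e in F | x \in e] by rewrite H set11.
rewrite inE => /andP[? ?]; exists e; split => // f fF xf.
have : f \in [set e in F | x \in e] by rewrite inE fF.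
by rewrite H => /set1P.
Qed.

Lemma deg_exhaust3 F x e1 e2 e3 : deg F x = 3 -> e1 \in F -> e2 \in F -> e3 \in F ->
  x \in e1 -> x \in e2 -> x \in e3 -> e1 != e2 -> e1 != e3 -> e2 != e3 ->
  forall e, e \in F -> x \in e -> [\/ e = e1, e = e2 | e = e3].
Proof.
move=> d h1 h2 h3 x1 x2 x3 n12 n13 n23 e eF xe.
have sub : [set e1; e2; e3] \subset [set f in F | x \in f].
  by apply/subsetP => f; rewrite !inE => /orP[/orP[]|] /eqP ->; apply/andP.
have c3 : #|[set e1; e2; e3]| = 3.
  rewrite -setUA cardsU1 cards2 n23 !inE negb_or n12 n13 //.
have : [set e1; e2; e3] == [set f in F | x \in f] by rewrite eqEcard sub c3 -/(deg F x) d.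
move/eqP => H.
have : e \in [set f in F | x \in f] by rewrite inE eF.
rewrite -H !inE => /orP[/orP[]|] /eqP ->; by constructor.
Qed.

Lemma deg_exhaust2 F x e1 e2 : deg F x = 2 -> e1 \in F -> e2 \in F ->
  x \in e1 -> x \in e2 -> e1 != e2 ->
  forall e, e \in F -> x \in e -> e = e1 \/ e = e2.
Proof.
move=> d h1 h2 x1 x2 n12 e eF xe.
have sub : [set e1; e2] \subset [set f in F | x \in f].
  by apply/subsetP => f; rewrite !inE => /orP[] /eqP ->; apply/andP.
have : [set e1; e2] == [set f in F | x \in f] by rewrite eqEcard sub cards2 n12 -/(deg F x) d.
move/eqP => H.
have : e \in [set f in F | x \in f] by rewrite inE eF.
by rewrite -H => /set2P.
Qed.

End Basics.

Section Cyc.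
Variable V : finType.
Implicit Types (S : {set V}) (E F T C M : {set {set V}}).

Lemma adjE F a b : adj F a b = ([set a; b] \in F).
Proof. by []. Qed.

Lemma cycle_of_edge F p q : p != q -> [set p; q] \in F ->
  connect (adj (F :\ [set p; q])) p q -> has_cycle F.
Proof.
move=> pq eF /connectP [s ps lq].
move: lq; case: (shortenP ps) => s' ps' us' _ lq'.
exists (p :: s'); split => //.
  case: s' ps' us' lq' => [|z [|z' s'']] //=.
    by move=> _ _ qp; move: pq; rewrite qp eqxx.
  move=> /andP[h _] _ zq; move: h; rewrite -zq adjE !inE eqxx //.
rewrite /= rcons_path; apply/andP; split.
  apply: sub_path ps' => y z; rewrite !adjE !inE => /andP[_ ->] //.
by rewrite -lq' adjE setUC.
Qed.

Lemma edge_of_cycle F : has_cycle F ->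
  exists p q, [/\ p != q, [set p; q] \in F & connect (adj (F :\ [set p; q])) p q].
Proof.
move=> [[|x0 [|x1 [|y s3]]] [u sz cyc]] //.
move: cyc u; rewrite /= rcons_path => /and3P [a01 a1y /andP[pth alast]].
rewrite !inE !negb_or => /and4P [/and3P [n01 n0y n0s] /andP [n1y n1s] nys us].
exists x1, x0; split => //.
- by rewrite eq_sym.
- by rewrite setUC.
have P : forall a b, a != x1 -> b != x1 -> adj F a b -> adj (F :\ [set x1; x0]) a b.
  move=> a b ha hb; rewrite !adjE !inE => ->; rewrite andbT.
  by apply/eqP => /set2_eq [[h _]|[_ h]]; [move: ha | move: hb]; rewrite h eqxx.
apply/connectP; exists (y :: rcons s3 x0).
  have a1y' : [set x1; y] \in F := a1y.
  rewrite /= {1}adjE !inE a1y' andbT; apply/andP; split.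
    by apply/eqP => /set2_eq [[_ h]|[h _]]; [move: n0y | move: n01]; rewrite h eqxx.
  apply: (sub_in_path (P := predC1 x1)) => //.
  - by move=> a b; rewrite !inE; apply: P.
  rewrite /= all_rcons; apply/and3P; split; [by rewrite eq_sym | by apply/eqP => h; move: n01; rewrite h eqxx|].
  by apply/allP => z zs /=; apply/eqP => h; move: n1s; rewrite -h zs.
  by rewrite rcons_path pth.
by rewrite /= last_rcons.
Qed.

End Cyc.

Section Supp.
Variable V : finType.
Implicit Types (S : {set V}) (E F T C M : {set {set V}}).

Lemma neq_mem (e f : {set V}) w : w \notin e -> w \in f -> e != f.
Proof. by move=> h1 h2; apply/eqP => H; move: h1; rewrite H h2. Qed.

Lemma adj_connect1 F a b : adj F a b -> connect (adj F) a b.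
Proof. by move=> h; apply: connect1. Qed.

Lemma connect_symF F a b : connect (adj F) a b -> connect (adj F) b a.
Proof. by rewrite (sym_connect_sym (@adj_sym _ F)). Qed.

Lemma suppress_tree S T w a b :
  w \in S -> a != b -> a != w -> b != w ->
  [set a; w] \in T -> [set w; b] \in T ->
  (forall z, [set w; z] \in T -> z = a \/ z = b) ->
  connected_on S T -> ~ has_cycle T ->
  connected_on (S :\ w) ([set a; b] |: (T :\ [set a; w] :\ [set w; b])) /\
  ~ has_cycle ([set a; b] |: (T :\ [set a; w] :\ [set w; b])).
Proof.
move=> wS ab aw bw awT wbT nbw conT acT.
set T1 := _ |: _.
have sub1 : forall p q, p != w -> q != w -> adj T p q -> adj T1 p q.
  move=> p q pw qw; rewrite !adjE !inE => ->; rewrite !andbT.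
  apply/orP; right; apply/andP; split; apply: (@neq_mem _ _ w); rewrite ?inE ?eqxx ?orbT //;
    by rewrite negb_or eq_sym pw eq_sym qw.
have ab1 : adj T1 a b by rewrite adjE /T1 setU11.
have ba1 : adj T1 b a by rewrite adj_sym.
split.
  move=> x y; rewrite !inE => /andP [xw xS] /andP [yw yS].
  pose P p := if p == w then connect (adj T1) x a else connect (adj T1) x p.
  suff : P y by rewrite /P (negbTE yw).
  apply: (connect_ind (P := P)) (conT x y xS yS); first by rewrite /P (negbTE xw).
  move=> p q; rewrite /P; case: eqP => [->|pw'].
    move=> cxa; rewrite adjE => /nbw [] ->; rewrite ?(negbTE aw) ?(negbTE bw) //.
    by apply: connect_trans cxa (adj_connect1 ab1).
  have pw : p != w by apply/eqP.
  case: eqP => [->|qw'].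
    move=> cxp; rewrite adjE setUC => /nbw [] pe; move: cxp; rewrite pe // => cxb.
    by apply: connect_trans cxb (adj_connect1 ba1).
  move=> cxp apq; apply: connect_trans cxp (adj_connect1 (sub1 _ _ pw _ apq)).
  by apply/eqP.
move=> /edge_of_cycle [p [q [pq eT1 c]]]; apply: acT.
have awb : [set w; b] != [set a; w].
  by apply: (@neq_mem _ _ a); rewrite !inE ?eqxx ?orbT // negb_or aw ab.
case: (eqVneq [set p; q] [set a; b]) => [epq|npq].
  have c' : connect (adj (T :\ [set a; w])) p q.
    apply: connect_sub c => y z; rewrite adjE epq !inE => /andP [nyz].
    move=> /orP [/eqP h|]; first by move: nyz; rewrite h eqxx.
    by move=> /and3P [_ h1 h2]; apply: connect1; rewrite adjE !inE h1 h2.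
  have cab : connect (adj (T :\ [set a; w])) a b.
    by case: (set2_eq epq) => [[ea eb]|[ea eb]]; move: c'; rewrite ea eb //; apply: connect_symF.
  apply: (@cycle_of_edge _ _ a w) => //.
  apply: connect_trans cab (adj_connect1 _).
  by rewrite adjE !inE setUC awb wbT.
move: eT1; rewrite !inE (negbTE npq) /= => /and3P [n2 n1 eT].
apply: (@cycle_of_edge _ _ p q) => //.
apply: connect_sub c => y z; rewrite adjE !inE => /andP [nyz].
case/orP => [/eqP h|/and3P [_ _ yzT]]; last by apply: connect1; rewrite adjE !inE nyz yzT.
have h1 : adj (T :\ [set p; q]) a w by rewrite adjE !inE awT andbT eq_sym.
have h2 : adj (T :\ [set p; q]) w b by rewrite adjE !inE wbT andbT eq_sym.
case: (set2_eq h) => [[-> ->]|[-> ->]].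
  by apply: connect_trans (adj_connect1 h1) (adj_connect1 h2).
by apply: connect_symF; apply: connect_trans (adj_connect1 h1) (adj_connect1 h2).
Qed.

End Supp.

Section Ops.
Variable V : finType.
Implicit Types (S : {set V}) (E F T C M : {set {set V}}).

Lemma disj (A B : {set {set V}}) e : A :&: B = set0 -> e \in A -> e \in B -> False.
Proof. move=> H a b; have : e \in A :&: B by rewrite inE a b.
by rewrite H inE. Qed.

Lemma memU3 T C M E e : T :|: C :|: M = E -> (e \in E) = [|| e \in T, e \in C | e \in M].
Proof. by move=> <-; rewrite !inE orbA. Qed.

Lemma graph_neq S E a b : is_graph S E -> [set a; b] \in E -> a != b.
Proof. by move=> G /G [c _]; move: c; rewrite cards2; case: (a != b). Qed.

Lemma graph_mem S E e x : is_graph S E -> e \in E -> x \in e -> x \in S.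
Proof. by move=> G /G [_ s] xe; apply: (subsetP s). Qed.

Lemma delM_inv S E T C M e : e \in M -> is_graph S E -> decomp3 S E T C M ->
  is_graph S (E :\ e) /\ decomp3 S (E :\ e) T C (M :\ e).
Proof.
move=> eM G [[TE [conT acT]] [CE Creg] [ME Mm] [TC [TM CM]] U].
have nT : forall f, f \in T -> f != e by move=> f fT; apply/eqP => h; subst; apply: (disj TM fT eM).
have nC : forall f, f \in C -> f != e by move=> f fC; apply/eqP => h; subst; apply: (disj CM fC eM).
split.
  by move=> f; rewrite inE => /andP [_ /G].
split.
- split; last by [].
  by apply/subsetP => f fT; rewrite !inE nT // (subsetP TE).
- split; last by [].
  by apply/subsetP => f fC; rewrite !inE nC // (subsetP CE).
- split.
    by apply/subsetP => f; rewrite !inE => /andP [-> /(subsetP ME) ->].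
  move=> x; apply: leq_trans (Mm x); apply: deg_sub; exact: subsetDl.
- split; first by [].
  split; apply/setP => f; rewrite !inE.
    by case: (boolP (f \in T)) => fT //=; case: (boolP (f \in M)) => fM; [exfalso; exact: disj TM fT fM | rewrite andbF].
  by case: (boolP (f \in C)) => fC //=; case: (boolP (f \in M)) => fM; [exfalso; exact: disj CM fC fM | rewrite andbF].
apply/setP => f; rewrite !inE (memU3 f U).
case: (boolP (f \in T)) => fT; first by rewrite (nT _ fT).
case: (boolP (f \in C)) => fC; first by rewrite (nC _ fC) orbT.
by rewrite /=.
Qed.

Lemma deg_delM E e x : e \in E -> deg E x = deg (E :\ e) x + (x \in e).
Proof. exact: deg_D1. Qed.

Lemma supp_inv S E T C M w a b :
  is_graph S E -> decomp3 S E T C M -> w \in S -> a != b ->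
  [set a; w] \in T -> [set w; b] \in T -> [set a; b] \notin E ->
  (forall e, e \in E -> w \in e -> e = [set a; w] \/ e = [set w; b]) ->
  [/\ is_graph (S :\ w) ([set a; b] |: (E :\ [set a; w] :\ [set w; b])),
      decomp3 (S :\ w) ([set a; b] |: (E :\ [set a; w] :\ [set w; b]))
                       ([set a; b] |: (T :\ [set a; w] :\ [set w; b])) C M &
      forall x, x != w -> deg ([set a; b] |: (E :\ [set a; w] :\ [set w; b])) x = deg E x].
Proof.
move=> G [[TE [conT acT]] [CE Creg] [ME Mm] [TC [TM CM]] U] wS ab awT wbT abE exh.
have awE : [set a; w] \in E by apply: (subsetP TE).
have wbE : [set w; b] \in E by apply: (subsetP TE).
have aw : a != w by apply: graph_neq G awE.
have wb : w != b by apply: graph_neq G wbE.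
have bw : b != w by rewrite eq_sym.
have aS : a \in S by apply: graph_mem G awE _; rewrite set21.
have bS : b \in S by apply: graph_mem G wbE _; rewrite set22.
have awb : [set a; w] != [set w; b].
  by apply: (@neq_mem _ _ _ b); rewrite !inE ?eqxx ?orbT // negb_or eq_sym ab bw.
have nT : forall f, f \in C -> (f != [set w; b]) && (f != [set a; w]).
  by move=> f fC; apply/andP; split; apply/eqP => h; subst; apply: (disj TC _ fC).
have nM : forall f, f \in M -> (f != [set w; b]) && (f != [set a; w]).
  by move=> f fM; apply/andP; split; apply/eqP => h; subst; apply: (disj TM _ fM).
have nbw : forall z, [set w; z] \in T -> z = a \/ z = b.
  move=> z /(subsetP TE) /exh; rewrite set21 => /(_ isT) [] /set2_eq [] [] h1 h2; auto.
    by move: aw; rewrite -h1 eqxx.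
  by move: wb; rewrite -h1 eqxx.
have [conT1 acT1] := suppress_tree wS ab aw bw awT wbT nbw conT acT.
have abC : [set a; b] \notin C by apply/negP => /(subsetP CE); apply/negP.
have abM : [set a; b] \notin M by apply/negP => /(subsetP ME); apply/negP.
split.
- move=> f; rewrite !inE => /orP [/eqP ->|/and3P [n2 n1 fE]].
    rewrite cards2 ab; split => //; apply/subsetP => z /set2P [] ->; rewrite !inE ?aS ?bS andbT //.
  have [c s] := G f fE; split => //.
  have wf : w \notin f by apply/negP => /(exh f fE) [] h; [move: n1 | move: n2]; rewrite h eqxx.
  by apply/subsetP => z zf; rewrite !inE (subsetP s _ zf) andbT; apply/eqP => h; move: wf; rewrite -h zf.
- split.
  + split; last by [].
    by apply/subsetP => f; rewrite !inE => /orP [->|/and3P [-> -> /(subsetP TE) ->]] //; rewrite orbT.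
  + split; last by [].
    by apply/subsetP => f fC; rewrite !inE (subsetP CE _ fC) andbT nT // orbT.
  + split; last by [].
    by apply/subsetP => f fM; rewrite !inE (subsetP ME _ fM) andbT nM // orbT.
  + split; [|split]; apply/setP => f; rewrite !inE.
    * case: eqP => [->|_] /=; first by rewrite (negbTE abC).
      by case: (boolP (f \in T)) => fT; rewrite ?andbF //; case: (boolP (f \in C)) => fC; [exfalso; exact: disj TC fT fC | rewrite andbF].
    * case: eqP => [->|_] /=; first by rewrite (negbTE abM).
      by case: (boolP (f \in T)) => fT; rewrite ?andbF //; case: (boolP (f \in M)) => fM; [exfalso; exact: disj TM fT fM | rewrite andbF].
    * by move: CM => /setP /(_ f); rewrite !inE.
  + apply/setP => f; rewrite !inE (memU3 f U).
    case: eqP => //= _.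
    case: (boolP (f \in T)) => fT.
      have fC : f \in C = false by apply/negP => fC; exact: disj TC fT fC.
      have fM : f \in M = false by apply/negP => fM; exact: disj TM fT fM.
      by rewrite fC fM !orbF.
    case: (boolP (f \in C)) => fC.
      by have /andP [h1 h2] := nT f fC; rewrite h1 h2.
    case: (boolP (f \in M)) => fM.
      by have /andP [h1 h2] := nM f fM; rewrite h1 h2.
    by rewrite !andbF.
move=> x xw.
have wbE' : [set w; b] \in E :\ [set a; w] by rewrite !inE eq_sym awb wbE.
rewrite deg_U1; last by rewrite !inE (negbTE abE) !andbF.
rewrite (deg_D1 x awE) (deg_D1 x wbE') !inE (negbTE xw) /= orbF -addnA; congr (_ + _).
by case: (eqVneq x a) => [->|]; rewrite ?(negbTE ab) //= addn0.
Qed.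

End Ops.

Section Tutte.
Variable V : finType.
Implicit Types (S : {set V}) (E F T C M : {set {set V}}).

Lemma set2_eqE (a b c d : V) : ([set a; b] == [set c; d]) = ((a == c) && (b == d)) || ((a == d) && (b == c)).
Proof.
apply/eqP/idP => [/set2_eq [[-> ->]|[-> ->]]|]; rewrite ?eqxx ?orbT //.
by case/orP => /andP [/eqP -> /eqP ->] //; rewrite setUC.
Qed.

Lemma neqF (x y : V) : x != y -> ((x == y) = false) * ((y == x) = false).
Proof. by move=> h; rewrite (negbTE h) eq_sym (negbTE h). Qed.

Lemma cardD1lt S x : x \in S -> #|S :\ x| < #|S|.
Proof. by move=> h; rewrite (cardsD1 x S) h. Qed.

Lemma tutte_red S E T C M u v xu yu xv yv :
  is_graph S E -> cubic S E -> decomp3 S E T C M ->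
  [set u; v] \in M ->
  [set xu; u] \in T -> [set u; yu] \in T -> xu != yu ->
  [set xv; v] \in T -> [set v; yv] \in T -> xv != yv ->
  [set xu; yu] \notin E -> [set xv; yv] \notin E -> [set xu; yu] != [set xv; yv] ->
  exists S' E' T' M', [/\ #|S'| < #|S|, is_graph S' E', cubic S' E',
     decomp3 S' E' T' C M' & tutte_ext S' E' T' S E T].
Proof.
move=> G cub D uvM xuT uyT xuyu xvT vyT xvyv nE1 nE2 n12.
have D' := D; case: D' => [[TE _] _ [ME _] [TC [TM CM]] U].
have uvE : [set u; v] \in E by apply: (subsetP ME).
have xuE : [set xu; u] \in E by apply: (subsetP TE).
have uyE : [set u; yu] \in E by apply: (subsetP TE).
have xvE : [set xv; v] \in E by apply: (subsetP TE).
have vyE : [set v; yv] \in E by apply: (subsetP TE).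
have uv := graph_neq G uvE.
have xuu := graph_neq G xuE.
have uyu := graph_neq G uyE.
have xvv := graph_neq G xvE.
have vyv := graph_neq G vyE.
have uS : u \in S by apply: graph_mem G uvE _; rewrite set21.
have vS : v \in S by apply: graph_mem G uvE _; rewrite set22.
have TMf : forall e, e \in T -> e \in M -> False by move=> e; apply: disj TM.
have xuv : xu != v by apply/eqP => h; subst; apply: (TMf _ xuT); rewrite setUC.
have yuv : yu != v by apply/eqP => h; subst; apply: (TMf _ uyT).
have xvu : xv != u by apply/eqP => h; subst; apply: (TMf _ xvT).
have yvu : yv != u by apply/eqP => h; subst; apply: (TMf _ vyT); rewrite setUC.
have [G0 D0] := delM_inv uvM G D.
set E0 := E :\ [set u; v] in G0 D0.
have dE0 : forall x, deg E x = deg E0 x + (x \in [set u; v]) by move=> x; apply: deg_D1.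
have du0 : deg E0 u = 2 by have := dE0 u; rewrite cub // set21 addn1 => -[].
have dv0 : deg E0 v = 2 by have := dE0 v; rewrite cub // set22 addn1 => -[].
have R0 := (set2_eqE, neqF uv, neqF xuu, neqF uyu, neqF xvv, neqF vyv, neqF xuv, neqF yuv, neqF xvu, neqF yvu, neqF xuyu, neqF xvyv, eqxx, andbF, andFb, orbF, orFb, andbT, andTb, orbT, orTb).
have xuE0 : [set xu; u] \in E0 by rewrite !inE xuE andbT ?R0.
have uyE0 : [set u; yu] \in E0 by rewrite !inE uyE andbT ?R0.
have exu : forall e, e \in E0 -> u \in e -> e = [set xu; u] \/ e = [set u; yu].
  by apply: deg_exhaust2 du0 xuE0 uyE0 _ _ _; rewrite ?R0 ?inE ?eqxx ?orbT.
have nE1' : [set xu; yu] \notin E0 by rewrite !inE (negbTE nE1) andbF.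
have [G1 D1 dg1] := supp_inv G0 D0 uS xuyu xuT uyT nE1' exu.
set E1 := _ |: _ in G1 D1 dg1.
set T1 := _ |: _ in D1.
have xvE1 : [set xv; v] \in E1 by rewrite !inE xvE ?R0.
have vyE1 : [set v; yv] \in E1 by rewrite !inE vyE ?R0.
have xvT1 : [set xv; v] \in T1 by rewrite !inE xvT ?R0.
have vyT1 : [set v; yv] \in T1 by rewrite !inE vyT ?R0.
have dv1 : deg E1 v = 2 by rewrite dg1 // eq_sym.
have exv : forall e, e \in E1 -> v \in e -> e = [set xv; v] \/ e = [set v; yv].
  by apply: deg_exhaust2 dv1 xvE1 vyE1 _ _ _; rewrite ?R0 ?inE ?eqxx ?orbT.
have vS1 : v \in S :\ u by rewrite !inE vS andbT eq_sym.
have nE2' : [set xv; yv] \notin E1 by rewrite !inE (negbTE nE2) eq_sym (negbTE n12) !andbF.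
have [G2 D2 dg2] := supp_inv G1 D1 vS1 xvyv xvT1 vyT1 nE2' exv.
set E2 := _ |: _ in G2 D2 dg2.
set T2 := _ |: _ in D2.
exists (S :\ u :\ v), E2, T2, (M :\ [set u; v]); split => //.
- apply: leq_ltn_trans (cardD1lt uS); apply: ltnW; exact: (cardD1lt vS1).
- move=> x; rewrite !inE => /and3P [hxv hxu xS].
  rewrite dg2 // dg1 // -(cub x xS) dE0 !inE (negbTE hxv) (negbTE hxu) addn0 //.
have nT1 : ([set xu; yu] \in T) = false by apply/negP => /(subsetP TE); apply/negP.
have nT2 : ([set xv; yv] \in T) = false by apply/negP => /(subsetP TE); apply/negP.
have Rn := (nT1, nT2, negbTE nE1, negbTE nE2, negbTE n12, xuT, uyT, xvT, vyT, uvE, xuE, uyE, xvE, vyE).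
exists xu, yu, xv, yv, u, v; split.
  by rewrite !inE ?R0 ?eqxx ?orbT.
split; first by rewrite !inE ?R0 ?eqxx.
split; first by [].
split; first by rewrite !inE ?eqxx ?andbF.
split; first by rewrite !inE ?eqxx ?andbF.
split; first by [].
split.
  apply/setP => x; rewrite !inE.
  case: (eqVneq x u) => [->|hu]; first by rewrite uS ?R0. case: (eqVneq x v) => [->|hv]; first by rewrite vS ?R0. by rewrite /= orbF.
split.
  apply/setP => e; rewrite !inE.
  case: (eqVneq e [set xu; u]) => [->|h1]; first by rewrite ?R0 ?Rn.
  case: (eqVneq e [set u; yu]) => [->|h2]; first by rewrite ?R0 ?Rn ?orbT.
  case: (eqVneq e [set xv; v]) => [->|h3]; first by rewrite ?R0 ?Rn ?orbT.
  case: (eqVneq e [set v; yv]) => [->|h4]; first by rewrite ?R0 ?Rn ?orbT.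
  case: (eqVneq e [set xu; yu]) => [->|h5]; first by rewrite ?R0 ?Rn ?orbT.
  case: (eqVneq e [set xv; yv]) => [->|h6]; first by rewrite ?R0 ?Rn ?orbT.
  by rewrite /= ?orbF.
apply/setP => e; rewrite !inE.
case: (eqVneq e [set xu; u]) => [->|h1]; first by rewrite ?R0 ?Rn.
case: (eqVneq e [set u; yu]) => [->|h2]; first by rewrite ?R0 ?Rn ?orbT.
case: (eqVneq e [set xv; v]) => [->|h3]; first by rewrite ?R0 ?Rn ?orbT.
case: (eqVneq e [set v; yv]) => [->|h4]; first by rewrite ?R0 ?Rn ?orbT.
case: (eqVneq e [set u; v]) => [->|h7]; first by rewrite ?R0 ?Rn ?orbT.
case: (eqVneq e [set xu; yu]) => [->|h5]; first by rewrite ?R0 ?Rn ?orbT.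
case: (eqVneq e [set xv; yv]) => [->|h6]; first by rewrite ?R0 ?Rn ?orbT.
by rewrite /= ?orbF.
Qed.

End Tutte.

Section Diamond.
Variable V : finType.
Implicit Types (S : {set V}) (E F T C M : {set {set V}}).

Lemma diamond_red S E T C M x y d1 d2 d3 d4 :
  is_graph S E -> cubic S E -> decomp3 S E T C M ->
  [set d1; d2] \in M -> [set d3; d4] \in M ->
  [set x; d1] \in T -> [set d1; d3] \in T -> [set d3; d2] \in T ->
  [set d2; d4] \in T -> [set d4; y] \in T ->
  uniq [:: x; y; d1; d2; d3; d4] -> [set x; y] \notin E ->
  exists S' E' T' M', [/\ #|S'| < #|S|, is_graph S' E', cubic S' E',
     decomp3 S' E' T' C M' & diamond_ext S' E' T' S E T].
Proof.
move=> G cub D m12 m34 t1 t2 t3 t4 t5 un nxy.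
have un' := un.
move: un'; rewrite /= !inE !negb_or => /andP [/and5P [xy xd1 xd2 xd3 xd4]
   /andP [/and4P [yd1 yd2 yd3 yd4] /andP [/and3P [d12 d13 d14] /andP [/andP [d23 d24] /andP [d34 _]]]]].
have R0 := (set2_eqE, neqF xy, neqF xd1, neqF xd2, neqF xd3, neqF xd4, neqF yd1, neqF yd2,
  neqF yd3, neqF yd4, neqF d12, neqF d13, neqF d14, neqF d23, neqF d24, neqF d34,
  eqxx, andbF, andFb, orbF, orFb, andbT, andTb, orbT, orTb).
have D' := D; case: D' => [[TE _] _ [ME _] [TC [TM CM]] U].
have e12 : [set d1; d2] \in E by apply: (subsetP ME).
have e34 : [set d3; d4] \in E by apply: (subsetP ME).
have e1 : [set x; d1] \in E by apply: (subsetP TE).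
have e2 : [set d1; d3] \in E by apply: (subsetP TE).
have e3 : [set d3; d2] \in E by apply: (subsetP TE).
have e4 : [set d2; d4] \in E by apply: (subsetP TE).
have e5 : [set d4; y] \in E by apply: (subsetP TE).
have d1S : d1 \in S by apply: graph_mem G e12 _; rewrite set21.
have d2S : d2 \in S by apply: graph_mem G e12 _; rewrite set22.
have d3S : d3 \in S by apply: graph_mem G e34 _; rewrite set21.
have d4S : d4 \in S by apply: graph_mem G e34 _; rewrite set22.
have nxd3 : [set x; d3] \notin E.
  apply/negP => h; have := deg_exhaust3 (cub d3 d3S) e2 e3 e34 _ _ _ _ _ _ h.
  by rewrite !inE ?R0 => /(_ isT isT isT isT isT isT isT) [] /eqP; rewrite ?R0.
have nxd2 : [set x; d2] \notin E.
  apply/negP => h; have := deg_exhaust3 (cub d2 d2S) e12 e3 e4 _ _ _ _ _ _ h.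
  by rewrite !inE ?R0 => /(_ isT isT isT isT isT isT isT) [] /eqP; rewrite ?R0.
have nxd4 : [set x; d4] \notin E.
  apply/negP => h; have := deg_exhaust3 (cub d4 d4S) e34 e4 e5 _ _ _ _ _ _ h.
  by rewrite !inE ?R0 => /(_ isT isT isT isT isT isT isT) [] /eqP; rewrite ?R0.
have [G0 D0] := delM_inv m12 G D.
have m34' : [set d3; d4] \in M :\ [set d1; d2] by rewrite !inE m34 ?R0.
have [G00 D00] := delM_inv m34' G0 D0.
set E00 := (E :\ _) :\ _ in G00 D00.
have dE00 : forall z, deg E z = deg E00 z + (z \in [set d3; d4]) + (z \in [set d1; d2]).
  move=> z; rewrite (deg_D1 z e12) (deg_D1 z (_ : [set d3; d4] \in E :\ [set d1; d2])) //.
  by rewrite !inE e34 ?R0.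
have dd1 : deg E00 d1 = 2 by have := dE00 d1; rewrite cub // !inE ?R0 /= ?addn0 ?addn1 => -[].
have dd2 : deg E00 d2 = 2 by have := dE00 d2; rewrite cub // !inE ?R0 /= ?addn0 ?addn1 => -[].
have dd3 : deg E00 d3 = 2 by have := dE00 d3; rewrite cub // !inE ?R0 /= ?addn0 ?addn1 => -[].
have dd4 : deg E00 d4 = 2 by have := dE00 d4; rewrite cub // !inE ?R0 /= ?addn0 ?addn1 => -[].
have ex1 : forall e, e \in E00 -> d1 \in e -> e = [set x; d1] \/ e = [set d1; d3].
  by apply: deg_exhaust2 dd1 _ _ _ _ _; rewrite ?R0 ?inE ?R0 ?e1 ?e2.
have n1 : [set x; d3] \notin E00 by rewrite !inE (negbTE nxd3) ?R0.
have [G1 D1 dg1] := supp_inv G00 D00 d1S xd3 t1 t2 n1 ex1.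
set E1 := _ |: _ in G1 D1 dg1; set T1 := _ |: _ in D1.
have ex3 : forall e, e \in E1 -> d3 \in e -> e = [set x; d3] \/ e = [set d3; d2].
  by apply: deg_exhaust2 (_ : deg E1 d3 = 2) _ _ _ _ _; rewrite ?dg1 ?R0 ?inE ?R0 ?e3.
have n3 : [set x; d2] \notin E1 by rewrite !inE (negbTE nxd2) ?R0.
have d3S1 : d3 \in S :\ d1 by rewrite !inE d3S ?R0.
have t3' : [set d3; d2] \in T1 by rewrite !inE t3 ?R0.
have [G2 D2 dg2] := supp_inv G1 D1 d3S1 xd2 (setU11 _ _) t3' n3 ex3.
set E2 := _ |: _ in G2 D2 dg2; set T2 := _ |: _ in D2.
have ex2 : forall e, e \in E2 -> d2 \in e -> e = [set x; d2] \/ e = [set d2; d4].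
  by apply: deg_exhaust2 (_ : deg E2 d2 = 2) _ _ _ _ _; rewrite ?dg2 ?dg1 ?R0 ?inE ?R0 ?e4.
have n2 : [set x; d4] \notin E2 by rewrite !inE (negbTE nxd4) ?R0.
have d2S2 : d2 \in S :\ d1 :\ d3 by rewrite !inE d2S ?R0.
have t4' : [set d2; d4] \in T2 by rewrite !inE t4 ?R0.
have [G3 D3 dg3] := supp_inv G2 D2 d2S2 xd4 (setU11 _ _) t4' n2 ex2.
set E3 := _ |: _ in G3 D3 dg3; set T3 := _ |: _ in D3.
have ex4 : forall e, e \in E3 -> d4 \in e -> e = [set x; d4] \/ e = [set d4; y].
  by apply: deg_exhaust2 (_ : deg E3 d4 = 2) _ _ _ _ _; rewrite ?dg3 ?dg2 ?dg1 ?R0 ?inE ?R0 ?e5.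
have n4 : [set x; y] \notin E3 by rewrite !inE (negbTE nxy) ?R0.
have d4S3 : d4 \in S :\ d1 :\ d3 :\ d2 by rewrite !inE d4S ?R0.
have t5' : [set d4; y] \in T3 by rewrite !inE t5 ?R0.
have [G4 D4 dg4] := supp_inv G3 D3 d4S3 xy (setU11 _ _) t5' n4 ex4.
set E4 := _ |: _ in G4 D4 dg4; set T4 := _ |: _ in D4.
exists (S :\ d1 :\ d3 :\ d2 :\ d4), E4, T4, (M :\ [set d1; d2] :\ [set d3; d4]); split => //.
- apply: leq_ltn_trans (cardD1lt d1S).
  apply: leq_trans (ltnW (cardD1lt d3S1)).
  apply: leq_trans (ltnW (cardD1lt d2S2)).
  exact: (ltnW (cardD1lt d4S3)).
- move=> z; rewrite !inE => /and5P [z4 z2 z3 z1 zS].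
  rewrite dg4 // dg3 // dg2 // dg1 // -(cub z zS) dE00 !inE (negbTE z1) (negbTE z2)
    (negbTE z3) (negbTE z4) /= !addn0 //.
have nT : forall e, e \notin E -> (e \in T) = false.
  by move=> e h; apply/negP => /(subsetP TE); apply/negP.
have Rn := (nT _ nxy, nT _ nxd2, nT _ nxd3, nT _ nxd4, negbTE nxy, negbTE nxd2, negbTE nxd3,
  negbTE nxd4, t1, t2, t3, t4, t5, e1, e2, e3, e4, e5, e12, e34).
exists x, y, d1, d2, d3, d4.
split; first by rewrite setU11.
split; first by rewrite /= !inE ?R0.
split; first by rewrite !inE ?R0.
split; first by rewrite !inE ?R0.
split; first by rewrite !inE ?R0.
split; first by rewrite !inE ?R0.
split.
  apply/setP => z; rewrite !inE.
  case: (eqVneq z d1) => [->|h1]; first by rewrite d1S ?R0.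
  case: (eqVneq z d2) => [->|h2]; first by rewrite d2S ?R0.
  case: (eqVneq z d3) => [->|h3]; first by rewrite d3S ?R0.
  case: (eqVneq z d4) => [->|h4]; first by rewrite d4S ?R0.
  by rewrite /= ?orbF.
split.
  apply/setP => e; rewrite !inE.
  case: (eqVneq e [set x; d1]) => [->|h1]; first by rewrite ?R0 ?Rn.
  case: (eqVneq e [set d1; d3]) => [->|h2]; first by rewrite ?R0 ?Rn.
  case: (eqVneq e [set d3; d2]) => [->|h3]; first by rewrite ?R0 ?Rn.
  case: (eqVneq e [set d2; d4]) => [->|h4]; first by rewrite ?R0 ?Rn.
  case: (eqVneq e [set d4; y]) => [->|h5]; first by rewrite ?R0 ?Rn.
  case: (eqVneq e [set x; y]) => [->|h6]; first by rewrite ?R0 ?Rn.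
  case: (eqVneq e [set x; d2]) => [->|h7]; first by rewrite ?R0 ?Rn.
  case: (eqVneq e [set x; d3]) => [->|h8]; first by rewrite ?R0 ?Rn.
  case: (eqVneq e [set x; d4]) => [->|h9]; first by rewrite ?R0 ?Rn.
  by rewrite /= ?orbF.
apply/setP => e; rewrite !inE.
case: (eqVneq e [set x; d1]) => [->|h1]; first by rewrite ?R0 ?Rn.
case: (eqVneq e [set d1; d3]) => [->|h2]; first by rewrite ?R0 ?Rn.
case: (eqVneq e [set d3; d2]) => [->|h3]; first by rewrite ?R0 ?Rn.
case: (eqVneq e [set d2; d4]) => [->|h4]; first by rewrite ?R0 ?Rn.
case: (eqVneq e [set d4; y]) => [->|h5]; first by rewrite ?R0 ?Rn.
case: (eqVneq e [set d1; d2]) => [->|h10]; first by rewrite ?R0 ?Rn.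
case: (eqVneq e [set d3; d4]) => [->|h11]; first by rewrite ?R0 ?Rn.
case: (eqVneq e [set x; y]) => [->|h6]; first by rewrite ?R0 ?Rn.
case: (eqVneq e [set x; d2]) => [->|h7]; first by rewrite ?R0 ?Rn.
case: (eqVneq e [set x; d3]) => [->|h8]; first by rewrite ?R0 ?Rn.
case: (eqVneq e [set x; d4]) => [->|h9]; first by rewrite ?R0 ?Rn.
by rewrite /= ?orbF.
Qed.

End Diamond.

Section Local.
Variable V : finType.
Variables (S : {set V}) (E T C M : {set {set V}}).
Hypothesis G : is_graph S E.
Hypothesis cub : cubic S E.
Hypothesis D : decomp3 S E T C M.

Lemma TE_ : T \subset E. Proof. by case: D => [[]]. Qed.
Lemma CE_ : C \subset E. Proof. by case: D => _ []. Qed.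
Lemma ME_ : M \subset E. Proof. by case: D => _ _ []. Qed.
Lemma con_ : connected_on S T. Proof. by case: D => [[_ []]]. Qed.
Lemma ac_ : ~ has_cycle T. Proof. by case: D => [[_ []]]. Qed.
Lemma Creg_ x : deg C x = 0 \/ deg C x = 2. Proof. by case: D => _ [_ ]. Qed.
Lemma Mm_ x : deg M x <= 1. Proof. by case: D => _ _ [_ ]. Qed.

Lemma TE p q : adj T p q -> adj E p q. Proof. exact: (subsetP TE_). Qed.
Lemma CE p q : adj C p q -> adj E p q. Proof. exact: (subsetP CE_). Qed.
Lemma ME p q : adj M p q -> adj E p q. Proof. exact: (subsetP ME_). Qed.

Lemma TMd p q : adj T p q -> adj M p q -> False.
Proof. by case: D => _ _ _ [_ [h _]] _; apply: disj h. Qed.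
Lemma TCd p q : adj T p q -> adj C p q -> False.
Proof. by case: D => _ _ _ [h _] _; apply: disj h. Qed.
Lemma CMd p q : adj C p q -> adj M p q -> False.
Proof. by case: D => _ _ _ [_ [_ h]] _; apply: disj h. Qed.

Lemma Eneq p q : adj E p q -> p != q. Proof. exact: graph_neq G. Qed.
Lemma Tneq p q : adj T p q -> p != q. Proof. by move/TE/Eneq. Qed.
Lemma Mneq p q : adj M p q -> p != q. Proof. by move/ME/Eneq. Qed.
Lemma ES p q : adj E p q -> p \in S. Proof. by move=> h; apply: graph_mem G h _; rewrite set21. Qed.

Lemma deg3 p : p \in S -> deg T p + deg C p + deg M p = 3.
Proof.
move=> pS; rewrite -(cub pS); case: D => _ _ _ [h1 [h2 h3]] U.
by rewrite -U deg_part.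
Qed.

Lemma degTpos p : p \in S -> 0 < deg T p.
Proof.
move=> pS; have : 0 < deg E p by rewrite cub.
rewrite /deg card_gt0 => /set0Pn [e]; rewrite inE => /andP [eE pe].
have [c _] := G eE; have [q [qp ee]] := edge2 c pe; subst e.
have qS : q \in S by apply: graph_mem G eE _; rewrite set22.
move/connectP: (con_ pS qS) => [[|z s] /= pth lq]; first by move: qp; rewrite lq eqxx.
by move/andP: pth => [h _]; apply: (deg_gt0 h); rewrite set21.
Qed.

Lemma T2 p : p \in S -> deg T p = 2 -> deg C p = 0 /\ deg M p = 1.
Proof.
move=> pS dT; have := deg3 pS; rewrite dT; have := Mm_ p.
by case: (Creg_ p) => ->; case: (deg M p) => [|[|]] //.
Qed.

Lemma Mend p q : adj M p q -> deg T p = 2 /\ deg C p = 0.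
Proof.
move=> h; have pS := ES (ME h).
have dM : deg M p = 1.
  by apply/eqP; rewrite eqn_leq Mm_ (deg_gt0 h) // set21.
have := deg3 pS; have := degTpos pS; rewrite dM.
by case: (Creg_ p) => ->; case: (deg T p) => [|[|[|n]]] //= _ /eqP; rewrite ?addn0 ?addn1 ?addnS ?addSn ?eqSS.
Qed.

Lemma Cleaf p q : adj C p q -> deg T p = 1.
Proof.
move=> h; have pS := ES (CE h).
have dC : deg C p = 2 by case: (Creg_ p) => // h0; move: (deg_gt0 h (set21 p q)); rewrite h0.
have := deg3 pS; have := degTpos pS; rewrite dC.
by case: (deg T p) => [|[|[|n]]] //= _ /eqP; rewrite ?addn0 ?addn1 ?addnS ?addSn ?eqSS.
Qed.

Lemma nbr2 p q : deg T p = 2 -> adj T p q ->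
  exists r, [/\ r != q, adj T p r & forall z, adj T p z -> z = q \/ z = r].
Proof.
move=> d h.
have [e1 [e2 [ne [e1T e2T pe1 pe2 ex]]]] := deg2_edges d.
have [c1 _] := G (subsetP TE_ _ e1T); have [c2 _] := G (subsetP TE_ _ e2T).
have [r1 [_ ee1]] := edge2 c1 pe1; have [r2 [_ ee2]] := edge2 c2 pe2; subst e1 e2.
have r12 : r1 != r2 by apply/eqP => h'; move: ne; rewrite h' eqxx.
have nb : forall z, adj T p z -> z = r1 \/ z = r2.
  move=> z hz; have pz := Tneq hz.
  by case: (ex _ hz (set21 p z)) => /set2_eq [[_ ->]|[_ e]]; auto; move: pz; rewrite e eqxx.
have nb2 : forall z, z = r1 \/ z = r2 -> adj T p z.
  by move=> z [] ->; [exact: e1T | exact: e2T].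
case: (nb q h) => ->.
  by exists r2; split; [rewrite eq_sym | exact: e2T | move=> z /nb [] ->; auto].
by exists r1; split; [ | exact: e1T | move=> z /nb [] ->; auto].
Qed.

Lemma nbr1 p q : deg T p = 1 -> adj T p q -> forall z, adj T p z -> z = q.
Proof.
move=> d h z hz; have [e [eT pe ex]] := deg1_edge d.
have e1 := ex _ h (set21 p q); have e2 := ex _ hz (set21 p z).
have pq := Tneq h.
by rewrite -e1 in e2; case: (set2_eq e2) => [[_ ->]|[h1 h2]] //; subst; move: pq; rewrite eqxx.
Qed.

Lemma nbr3 p q1 q2 q3 : p \in S -> adj E p q1 -> adj E p q2 -> adj E p q3 ->
  q1 != q2 -> q1 != q3 -> q2 != q3 -> forall z, adj E p z -> [\/ z = q1, z = q2 | z = q3].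
Proof.
move=> pS h1 h2 h3 n12 n13 n23 z hz.
have neq : forall a b, a != b -> [set p; a] != [set p; b].
  by move=> a b ab; apply/eqP => /set2_eq [[_ h]|[h1' h2']]; [move: ab; rewrite h eqxx | subst; move: ab; rewrite eqxx].
have := deg_exhaust3 (cub pS) h1 h2 h3 (set21 _ _) (set21 _ _) (set21 _ _) (neq _ _ n12) (neq _ _ n13) (neq _ _ n23) hz (set21 _ _).
have pz := Eneq hz.
case=> /set2_eq [[_ ->]|[h h']]; try by constructor.
all: by subst; move: pz; rewrite eqxx.
Qed.

Lemma closure (K : {set V}) x : x \in S -> x \in K ->
  (forall p q, p \in K -> adj T p q -> q \in K) -> forall y, y \in S -> y \in K.
Proof.
move=> xS xK cl y yS.
by apply: (connect_ind (P := fun z => z \in K)) (con_ xS yS) => // p q; apply: cl.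
Qed.

Lemma flip (F : {set {set V}}) p q : adj F p q -> adj F q p. Proof. by rewrite adj_sym. Qed.

Lemma ncyc s : uniq s -> 3 <= size s -> cycle (adj T) s -> False.
Proof. by move=> u sz c; apply: ac_; exists s. Qed.

Lemma nbr2' p : deg T p = 2 ->
  exists q r, [/\ q != r, adj T p q, adj T p r & forall z, adj T p z -> z = q \/ z = r].
Proof.
move=> d.
have [e1 [e2 [ne [e1T e2T pe1 pe2 ex]]]] := deg2_edges d.
have [c1 _] := G (subsetP TE_ _ e1T); have [c2 _] := G (subsetP TE_ _ e2T).
have [r1 [_ ee1]] := edge2 c1 pe1; have [r2 [_ ee2]] := edge2 c2 pe2; subst e1 e2.
have r12 : r1 != r2 by apply/eqP => h'; move: ne; rewrite h' eqxx.
exists r1, r2; split => // z hz; have pz := Tneq hz.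
by case: (ex _ hz (set21 p z)) => /set2_eq [[_ ->]|[_ e]]; auto; move: pz; rewrite e eqxx.
Qed.

Definition RGoal := exists (S' : {set V}) (E' T' M' : {set {set V}}), [/\ #|S'| < #|S|, is_graph S' E', cubic S' E',
  decomp3 S' E' T' C M' & tutte_ext S' E' T' S E T \/ diamond_ext S' E' T' S E T].

Lemma memE e : e \in E -> [\/ e \in T, e \in C | e \in M].
Proof.
case: D => _ _ _ _ U; rewrite (memU3 e U).
by case/orP => [->|/orP [] ->]; constructor.
Qed.

Lemma tri_M u v a b : adj M u v -> adj T u a -> adj T u b -> a != b -> adj E a b -> adj M a b.
Proof.
move=> uv ua ub ab /memE [] // h.
  exfalso; apply: (ncyc (s := [:: u; a; b])) => //.
    by rewrite /= !inE negb_or (Tneq ua) (Tneq ub) ab.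
  by rewrite /= ua (h : adj T a b) (flip ub).
exfalso.
have la := Cleaf h; have lb := Cleaf (flip h).
have [_ dC] := Mend uv.
have [du _] := Mend uv.
have [r [ra ur nb]] := nbr2 du ua.
have rb : r = b by case: (nb b ub) => // e; move: ab; rewrite e eqxx.
subst r.
have uS := ES (ME uv); have vS := ES (flip (ME uv)).
have uK : u \in [set u; a; b] by rewrite !inE eqxx.
have cl : forall p q, p \in [set u; a; b] -> adj T p q -> q \in [set u; a; b].
  move=> p q; rewrite !inE => /orP [/orP []|] /eqP -> hq.
  - by case: (nb q hq) => ->; rewrite eqxx ?orbT.
  - by rewrite (nbr1 la (flip ua) hq) eqxx.
  - by rewrite (nbr1 lb (flip ub) hq) eqxx.
have := closure uS uK cl vS; rewrite !inE.
case/orP => [/orP []|] /eqP e; subst v.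
- by move: (Mneq uv); rewrite eqxx.
- by apply: (TMd ua uv).
- by apply: (TMd ub uv).
Qed.

Lemma goal_tutte u v xu yu xv yv :
  [set u; v] \in M ->
  [set xu; u] \in T -> [set u; yu] \in T -> xu != yu ->
  [set xv; v] \in T -> [set v; yv] \in T -> xv != yv ->
  [set xu; yu] \notin E -> [set xv; yv] \notin E -> [set xu; yu] != [set xv; yv] -> RGoal.
Proof.
move=> h1 h2 h3 h4 h5 h6 h7 h8 h9 h10.
have [S' [E' [T' [M' [? ? ? ? ?]]]]] := tutte_red G cub D h1 h2 h3 h4 h5 h6 h7 h8 h9 h10.
by exists S', E', T', M'; split => //; left.
Qed.

Lemma goal_diamond x y d1 d2 d3 d4 :
  [set d1; d2] \in M -> [set d3; d4] \in M ->
  [set x; d1] \in T -> [set d1; d3] \in T -> [set d3; d2] \in T ->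
  [set d2; d4] \in T -> [set d4; y] \in T ->
  uniq [:: x; y; d1; d2; d3; d4] -> [set x; y] \notin E -> RGoal.
Proof.
move=> h1 h2 h3 h4 h5 h6 h7 h8 h9.
have [S' [E' [T' [M' [? ? ? ? ?]]]]] := diamond_red G cub D h1 h2 h3 h4 h5 h6 h7 h8 h9.
by exists S', E', T', M'; split => //; right.
Qed.

Lemma diamond_case u v a b b' :
  adj M u v -> a != b -> adj T u a -> adj T u b -> adj M a b ->
  (forall z, adj T u z -> z = a \/ z = b) ->
  adj T a v -> (forall z, adj T a z -> z = u \/ z = v) ->
  adj T b b' -> b' != u -> (forall z, adj T b z -> z = u \/ z = b') ->
  RGoal.
Proof.
move=> uv ab ua ub mab nbu av nba bb' b'u nbb.
have [dv _] := Mend (flip uv).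
have [x [xa vx nbv]] := nbr2 dv (flip av).
have uS := ES (ME uv); have vS := ES (flip (ME uv)).
have aS := ES (ME mab); have bS := ES (flip (ME mab)).
have uv' := Mneq uv.
have ua' := Tneq ua.
have ub' := Tneq ub.
have av' := Tneq av.
have bv : b != v by apply/eqP => e; rewrite e in ub; apply: (TMd ub uv).
have vx' := Tneq vx.
have xu : x != u by apply/eqP => e; rewrite e in vx; apply: (TMd vx (flip uv)).
have bb'' := Tneq bb'.
have b'a : b' != a by apply/eqP => e; rewrite e in bb'; apply: (TMd bb' (flip mab)).
have R0 := (neqF uv', neqF ua', neqF ub', neqF av', neqF bv, neqF vx', neqF xu, neqF xa,
  neqF bb'', neqF b'a, neqF b'u, neqF ab, eqxx).
have xb : x != b.
  apply/eqP => e; rewrite e in vx.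
  apply: (ncyc (s := [:: v; a; u; b])); first by rewrite /= !inE ?R0.
    by [].
  by rewrite /= (flip av) (flip ua) ub (flip vx).
have b'v : b' != v.
  apply/eqP => e; rewrite e in bb'.
  apply: (ncyc (s := [:: v; a; u; b])); first by rewrite /= !inE ?R0.
    by [].
  by rewrite /= (flip av) (flip ua) ub bb'.
have xb' : x != b'.
  apply/eqP => e; rewrite -e in bb'.
  apply: (ncyc (s := [:: x; v; a; u; b])); first by rewrite /= !inE ?R0 ?(neqF xb).
    by [].
  by rewrite /= (flip vx) (flip av) (flip ua) ub bb'.
have R := (R0, neqF xb, neqF b'v, neqF xb').
have Nu : forall z, adj E u z -> [\/ z = a, z = b | z = v].
  exact: (nbr3 uS (TE ua) (TE ub) (ME uv) ab av' bv).
have Na : forall z, adj E a z -> [\/ z = u, z = b | z = v].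
  exact: (nbr3 aS (TE (flip ua)) (ME mab) (TE av) ub' uv' bv).
have Nv : forall z, adj E v z -> [\/ z = u, z = a | z = x].
  by apply: (nbr3 vS (ME (flip uv)) (TE (flip av)) (TE vx) ua'); rewrite eq_sym.
have Nb : forall z, adj E b z -> [\/ z = u, z = a | z = b'].
  by apply: (nbr3 bS (TE (flip ub)) (ME (flip mab)) (TE bb') ua'); rewrite eq_sym.
case: (boolP ([set x; b'] \in E)) => hxb; last first.
  apply: (goal_diamond (flip uv) mab (flip vx) (flip av) (flip ua) ub bb' _ hxb).
  by rewrite /= !inE ?R.
case: (memE hxb) => h.
- exfalso; apply: (ncyc (s := [:: x; v; a; u; b; b'])); first by rewrite /= !inE ?R.
    by [].
  by rewrite /= (flip vx) (flip av) (flip ua) ub bb' (flip (h : adj T x b')).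
- exfalso.
  have lx := Cleaf (h : adj C x b'); have lb' := Cleaf (flip (h : adj C x b')).
  set K := [set x; v; a; u; b; b'].
  have uK : u \in K by rewrite !inE eqxx ?orbT.
  have cl : forall p q, p \in K -> adj T p q -> q \in K.
    move=> p q; rewrite !inE -!orbA => /or4P [/eqP ->|/eqP ->|/eqP ->|/orP [/eqP ->|/orP [/eqP ->|/eqP ->]]] hq.
    + by rewrite (nbr1 lx (flip vx) hq) eqxx ?orbT.
    + by case: (nbv q hq) => ->; rewrite eqxx ?orbT.
    + by case: (nba q hq) => ->; rewrite eqxx ?orbT.
    + by case: (nbu q hq) => ->; rewrite eqxx ?orbT.
    + by case: (nbb q hq) => ->; rewrite eqxx ?orbT.
    + by rewrite (nbr1 lb' (flip bb') hq) eqxx ?orbT.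
  have dC : deg C x = 2.
    by case: (Creg_ x) => // h0; move: (deg_gt0 h (set21 x b')); rewrite h0.
  have [f [fC xf nf]] : exists f, [/\ f \in C, x \in f & f != [set x; b']].
    have [e1 [e2 [ne [e1C e2C xe1 xe2 _]]]] := deg2_edges dC.
    case: (eqVneq e1 [set x; b']) => [e|n]; last by exists e1.
    by exists e2; split => //; rewrite -e eq_sym.
  have [c _] := G (subsetP CE_ _ fC).
  have [z [zx fe]] := edge2 c xf; subst f.
  have zS := ES (flip (CE fC)).
  have := closure uS uK cl zS.
  rewrite !inE -!orbA => /or4P [/eqP e|/eqP e|/eqP e|/orP [/eqP e|/orP [/eqP e|/eqP e]]].
  + by move: zx; rewrite e eqxx.
  + by rewrite e in fC; apply: (TCd (flip vx) fC).
  + by rewrite e in fC; have := Na _ (flip (CE fC)); case=> /eqP; rewrite ?R.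
  + by rewrite e in fC; have := Nu _ (flip (CE fC)); case=> /eqP; rewrite ?R.
  + by rewrite e in fC; have := Nb _ (flip (CE fC)); case=> /eqP; rewrite ?R.
  + by move: nf; rewrite e eqxx.
have hM : adj M x b' := h.
have [dx _] := Mend hM.
have [x2 [x2v xx2 nbx]] := nbr2 dx (flip vx).
have [db _] := Mend (flip hM).
have [y2 [y2b by2 nby]] := nbr2 db (flip bb').
apply: (goal_tutte (u := x) (v := b') (xu := v) (yu := x2) (xv := b) (yv := y2)) => //.
- by rewrite eq_sym.
- by rewrite eq_sym.
- apply/negP => h2; case: (Nv _ h2) => e; rewrite e in xx2.
  + by have := Nu _ (TE (flip xx2)); case=> /eqP; rewrite ?R.
  + by have := Na _ (TE (flip xx2)); case=> /eqP; rewrite ?R.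
  + by move: (Tneq xx2); rewrite eqxx.
- apply/negP => h2; case: (Nb _ h2) => e; rewrite e in by2.
  + by have := Nu _ (TE (flip by2)); case=> /eqP; rewrite ?R.
  + by have := Na _ (TE (flip by2)); case=> /eqP; rewrite ?R.
  + by move: (Tneq by2); rewrite eqxx.
apply/eqP => /set2_eq [[e _]|[e _]]; first by move: bv; rewrite e eqxx.
rewrite -e in by2.
by have := Nv _ (TE (flip by2)); case=> /eqP; rewrite ?R.
Qed.

Lemma tri_case u v a b :
  adj M u v -> a != b -> adj T u a -> adj T u b -> adj M a b ->
  (forall z, adj T u z -> z = a \/ z = b) -> RGoal.
Proof.
move=> uv ab ua ub mab nbu.
have [da _] := Mend mab.
have [a' [a'u aa' nba]] := nbr2 da (flip ua).
have [db _] := Mend (flip mab).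
have [b' [b'u bb' nbb]] := nbr2 db (flip ub).
case: (eqVneq a' v) => [e|a'v].
  rewrite e in aa' nba.
  exact: (diamond_case uv ab ua ub mab nbu aa' nba bb' b'u nbb).
case: (eqVneq b' v) => [e|b'v].
  rewrite e in bb' nbb.
  have nbu' : forall z, adj T u z -> z = b \/ z = a by move=> z /nbu []; auto.
  have ba : b != a by rewrite eq_sym.
  exact: (diamond_case uv ba ub ua (flip mab) nbu' bb' nbb aa' a'u nba).
have uS := ES (ME uv).
have av : a != v by apply/eqP => e; rewrite e in ua; apply: (TMd ua uv).
have bv : b != v by apply/eqP => e; rewrite e in ub; apply: (TMd ub uv).
have Nu : forall z, adj E u z -> [\/ z = a, z = b | z = v].
  exact: (nbr3 uS (TE ua) (TE ub) (ME uv) ab av bv).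
have a'b : a' != b by apply/eqP => e; rewrite e in aa'; apply: (TMd aa' mab).
have b'a : b' != a by apply/eqP => e; rewrite e in bb'; apply: (TMd bb' (flip mab)).
have ua2 : u != a' by rewrite eq_sym.
have ub2 : u != b' by rewrite eq_sym.
have n1 : [set u; a'] \notin E.
  apply/negP => h; case: (Nu _ h) => e.
  + by move: (Tneq aa'); rewrite e eqxx.
  + by move: a'b; rewrite e eqxx.
  + by move: a'v; rewrite e eqxx.
have n2 : [set u; b'] \notin E.
  apply/negP => h; case: (Nu _ h) => e.
  + by move: b'a; rewrite e eqxx.
  + by move: (Tneq bb'); rewrite e eqxx.
  + by move: b'v; rewrite e eqxx.
apply: (goal_tutte mab ua aa' ua2 ub bb' ub2 n1 n2).
apply/eqP => /set2_eq [[_ e]|[e _]]; last by move: b'u; rewrite e eqxx.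
rewrite -e in bb'.
apply: (ncyc (s := [:: u; a; a'; b])) => //.
  rewrite /= !inE !negb_or (Tneq ua) (Tneq ub) ab a'b (Tneq aa') andbT /=.
  by rewrite eq_sym a'u.
by rewrite /= ua aa' (flip bb') (flip ub).
Qed.

Lemma Medge_case u v : adj M u v -> RGoal.
Proof.
move=> uv.
have [du _] := Mend uv.
have [dv _] := Mend (flip uv).
have [xu [yu [xyu uxu uyu nbu]]] := nbr2' du.
have [xv [yv [xyv vxv vyv nbv]]] := nbr2' dv.
case: (boolP ([set xu; yu] \in E)) => hu.
  exact: (tri_case uv xyu uxu uyu (tri_M uv uxu uyu xyu hu) nbu).
case: (boolP ([set xv; yv] \in E)) => hv.
  exact: (tri_case (flip uv) xyv vxv vyv (tri_M (flip uv) vxv vyv xyv hv) nbv).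
apply: (goal_tutte uv (flip uxu) uyu xyu (flip vxv) vyv xyv hu hv).
apply/eqP => e.
have xuv : xu != v by apply/eqP => e'; rewrite e' in uxu; apply: (TMd uxu uv).
have yuv : yu != v by apply/eqP => e'; rewrite e' in uyu; apply: (TMd uyu uv).
have vxu : adj T v xu /\ adj T v yu.
  by case: (set2_eq e) => [[-> ->]|[-> ->]].
case: vxu => vxu vyu.
apply: (ncyc (s := [:: u; xu; v; yu])) => //.
  rewrite /= !inE !negb_or (Tneq uxu) (Tneq uyu) (Mneq uv) xyu xuv andbT /=.
  by rewrite eq_sym yuv.
by rewrite /= uxu (flip vxu) vyu (flip uyu).
Qed.

Lemma reduce : (exists x, x \in S /\ deg T x = 2) -> RGoal.
Proof.
move=> [x [xS dx]].
have [_ dM] := T2 xS dx.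
have [e [eM xe _]] := deg1_edge dM.
have [c _] := G (subsetP ME_ _ eM).
have [y [_ ee]] := edge2 c xe; subst e.
exact: (Medge_case eM).
Qed.

End Local.

Section Final.
Variable V : finType.

Lemma hist_M (S : {set V}) (E T C M : {set {set V}}) :
  is_graph S E -> cubic S E -> decomp3 S E T C M -> HIST S E T -> M = set0.
Proof.
move=> G cub D [_ H].
apply/setP => e; rewrite inE; apply/negP => eM.
have [c _] := G e (subsetP (ME_ D) _ eM).
move/eqP/cards2P: c => [p [q [pq ee]]]; subst e.
have h : adj M p q := eM.
have pS := ES G (ME D h).
have [d2 _] := Mend G cub D h.
by move: (H p pS); rewrite d2.
Qed.

Lemma red_or_hist (S : {set V}) (E T C M : {set {set V}}) :
  is_graph S E -> cubic S E -> decomp3 S E T C M -> ~ HIST S E T -> RGoal S E T C.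
Proof.
move=> G cub D nH; apply: (reduce G cub D).
case: (pickP (fun x => (x \in S) && (deg T x == 2))) => [x /andP [xS /eqP dx]|h].
  by exists x.
exfalso; apply: nH; split; first by case: D.
by move=> x xS; have := h x; rewrite xS /= => ->.
Qed.

Lemma to_hist C : forall n (S : {set V}) (E T M : {set {set V}}), #|S| <= n ->
  is_graph S E -> cubic S E -> decomp3 S E T C M ->
  exists (S' : {set V}) (E' T' M' : {set {set V}}),
     clos_refl_trans _ (red_step C) (S, E, T, M) (S', E', T', M') /\
     decomp3 S' E' T' C M' /\ HIST S' E' T'.
Proof.
elim=> [|n IH] S E T M sz G cub D.
  have HS : HIST S E T.
    split; first by case: D.
    by move=> x xS; move: sz; rewrite leqn0 => /eqP /cards0_eq S0; move: xS; rewrite S0 inE.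
  by exists S, E, T, M; split => //; apply: rt_refl.
case: (boolP [forall x in S, deg T x != 2]) => hH.
  have HS : HIST S E T.
    split; first by case: D.
    by move=> x xS; move/forall_inP: hH; apply.
  by exists S, E, T, M; split => //; apply: rt_refl.
have nH : ~ HIST S E T.
  by move=> [_ H]; move/negP: hH; apply; apply/forall_inP.
have [S1 [E1 [T1 [M1 [lt G1 cub1 D1 ext]]]]] := red_or_hist G cub D nH.
have sz1 : #|S1| <= n by rewrite -ltnS; apply: leq_trans lt sz.
have [S' [E' [T' [M' [ch [D' H']]]]]] := IH S1 E1 T1 M1 sz1 G1 cub1 D1.
exists S', E', T', M'; split => //.
apply: rt_trans ch; apply: rt_step; by split.
Qed.

End Final.

Theorem theorem1 (V : finType) (E T C M : {set {set V}}) :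
  is_graph [set: V] E -> cubic [set: V] E -> decomp3 [set: V] E T C M ->
  (HIST [set: V] E T -> M = set0) /\
  (~ HIST [set: V] E T ->
     exists (S' : {set V}) (E' T' M' : {set {set V}}),
       #|S'| < #|[set: V]| /\ is_graph S' E' /\ cubic S' E' /\
       decomp3 S' E' T' C M' /\
       (tutte_ext S' E' T' [set: V] E T \/ diamond_ext S' E' T' [set: V] E T)) /\
  (exists (S' : {set V}) (E' T' M' : {set {set V}}),
     clos_refl_trans _ (red_step C) ([set: V], E, T, M) (S', E', T', M') /\
     decomp3 S' E' T' C M' /\ HIST S' E' T').
Proof.
move=> G cub D; split; first exact: hist_M G cub D.
split.
  move=> nH; have [S' [E' [T' [M' [? ? ? ? ?]]]]] := red_or_hist G cub D nH.
  by exists S', E', T', M'.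
exact: (to_hist (leqnn _) G cub D).
Qed.
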